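(* There is a multi-valued function $F: [0,1] \Rightarrow \mathbb{R}$ such that $F(x)$ is closed for every $x\in[0,1]$, the graph of $F$ is a $\Pi^0_2$ subset of $[0,1]\times\mathbb{R}$, and the set of points of continuity of $F$ is not a $\Pi^0_3$ subset of $[0,1]$.
   Context: A multi-valued function $F: X \Rightarrow Y$ assigns to each $x$ a nonempty set $F(x)\subseteq Y$ and is identified with its graph $\{(x,y): y\in F(x)\}\subseteq X\times Y$. For metric spaces $(X,p),(Y,d)$, $F$ is continuous at $x$ if there is some $y \in F(x)$ such that for every $\varepsilon>0$ there is $\delta>0$ such that for every $x' \in B_p(x,\delta)$ there is $y' \in F(x')$ with $d(y,y')<\varepsilon$. Borel hierarchy: $\Sigma^0_1$ = open; $\Sigma^0_{n+1}$ = countable unions of sets whose complements are $\Sigma^0_k$ for some $k\le n$; $\Pi^0_n$ = complements of $\Sigma^0_n$ sets ($\Pi^0_2=G_\delta$, $\Pi^0_3$ = countable intersections of $F_\sigma$ sets). *)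

(* Defs.v *)
From Stdlib Require Import Reals Lra.
Open Scope R_scope.

(* Borel hierarchy relative to a subspace D of a type T whose topology is
   given by the predicate O of open sets. *)
Inductive Sigma0 {T : Type} (O : (T -> Prop) -> Prop) (D : T -> Prop)
  : nat -> (T -> Prop) -> Prop :=
| Sigma0_open : forall (U A : T -> Prop),
    O U -> (forall x, A x <-> (D x /\ U x)) -> Sigma0 O D 1 A
| Sigma0_union : forall (n : nat) (A : T -> Prop) (B : nat -> T -> Prop),
    (forall k x, B k x -> D x) ->
    (forall k, exists j, (1 <= j <= n)%nat /\
                 Sigma0 O D j (fun x => D x /\ ~ B k x)) ->
    (forall x, A x <-> exists k, B k x) ->
    Sigma0 O D (S n) A.

Definition Pi0 {T : Type} (O : (T -> Prop) -> Prop) (D : T -> Prop)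
  (n : nat) (A : T -> Prop) : Prop :=
  (forall x, A x -> D x) /\ Sigma0 O D n (fun x => D x /\ ~ A x).

(* Open sets of R x R (product topology = max-metric topology). *)
Definition open_RR (U : R * R -> Prop) : Prop :=
  forall p, U p -> exists e, 0 < e /\
    forall q, Rabs (fst q - fst p) < e -> Rabs (snd q - snd p) < e -> U q.

Definition I01 (x : R) : Prop := 0 <= x <= 1.
Definition I01xR (p : R * R) : Prop := I01 (fst p).

(* A multi-valued function F : [0,1] => R is a relation F x y (y \in F(x));
   only its values at x in [0,1] matter. *)
Definition graph (F : R -> R -> Prop) (p : R * R) : Prop :=
  I01 (fst p) /\ F (fst p) (snd p).

Definition mv_continuous_at (F : R -> R -> Prop) (x : R) : Prop :=
  exists y, F x y /\
    forall eps, 0 < eps -> exists delta, 0 < delta /\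
      forall x', I01 x' -> Rabs (x' - x) < delta ->
        exists y', F x' y' /\ Rabs (y - y') < eps.

Definition continuity_points (F : R -> R -> Prop) (x : R) : Prop :=
  I01 x /\ mv_continuous_at F x.

(* Main.v *)
Require Import Defs.
From Stdlib Require Import Reals ZArith Arith Lra Lia Classical ClassicalEpsilon FunctionalExtensionality Cantor.
From Coquelicot Require Coquelicot.
Open Scope R_scope.

Module P1M.
Import Coquelicot.Coquelicot.

Definition geo (q : nat) : R := (/4) ^ (S q).
Definition bit (b : bool) : R := if b then 1 else 0.
Definition h (d : nat -> bool) : R := Series (fun q => bit (d q) * geo q).
Definition agree (d d' : nat -> bool) (L : nat) : Prop :=
  forall p, (p < L)%nat -> d p = d' p.

Lemma geo_pos q : 0 < geo q.
Proof. unfold geo. apply pow_lt. lra. Qed.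

Lemma series_geo M : is_series (fun q => M * geo q) (M / 3).
Proof.
  assert (H := is_series_geom (/4) ltac:(rewrite Rabs_pos_eq; lra)).
  apply (is_series_scal_l (M * /4)) in H.
  replace (M/3) with (scal (M * /4) (/ (1 - /4))).
  - eapply is_series_ext; [|exact H]. intro n. unfold geo, scal; simpl.
    unfold mult; simpl. ring.
  - unfold scal; simpl. unfold mult; simpl. field.
Qed.

Lemma series_bound (a : nat -> R) M :
  (forall q, Rabs (a q) <= M * geo q) -> ex_series a /\ Rabs (Series a) <= M / 3.
Proof.
  intros Ha.
  assert (Eb : ex_series (fun q => M * geo q)) by (eexists; apply series_geo).
  assert (Ea : ex_series (fun q => Rabs (a q))).
  { apply (@ex_series_le R_AbsRing R_CompleteNormedModule _ (fun q => M * geo q)); auto.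
    intro n. change (norm (Rabs (a n))) with (Rabs (Rabs (a n))). rewrite Rabs_Rabsolu. apply Ha. }
  split. apply ex_series_Rabs; auto.
  eapply Rle_trans. apply Series_Rabs; auto.
  rewrite <- (is_series_unique _ _ (series_geo M)).
  apply Series_le; auto. intro n; split; [apply Rabs_pos|apply Ha].
Qed.

Lemma bit_bound b : 0 <= bit b <= 1.
Proof. destruct b; simpl; lra. Qed.

Lemma term_bound d q : Rabs (bit (d q) * geo q) <= 1 * geo q.
Proof.
  rewrite Rabs_mult, (Rabs_pos_eq (geo q)) by (left; apply geo_pos).
  apply Rmult_le_compat_r. left; apply geo_pos.
  destruct (d q); simpl; rewrite ?Rabs_R0, ?Rabs_R1; lra.
Qed.

Lemma ex_h d : ex_series (fun q => bit (d q) * geo q).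
Proof. apply (series_bound _ 1), term_bound. Qed.

Lemma h_I01 d : I01 (h d).
Proof.
  unfold I01, h. split.
  - assert (Z : Series (fun n => 0 * geo n) = 0) by (rewrite Series_scal_l; ring).
    rewrite <- Z. apply Series_le. 2: apply ex_h.
    intro n. rewrite Rmult_0_l. split. lra. apply Rmult_le_pos. apply bit_bound. left; apply geo_pos.
  - destruct (series_bound _ 1 (term_bound d)) as [_ H].
    apply Rabs_le_between in H. lra.
Qed.

Definition dterm d d' q := (bit (d q) - bit (d' q)) * geo q.

Lemma dterm_bound d d' q : Rabs (dterm d d' q) <= 1 * geo q.
Proof.
  unfold dterm. rewrite Rabs_mult, (Rabs_pos_eq (geo q)) by (left; apply geo_pos).
  apply Rmult_le_compat_r. left; apply geo_pos.
  destruct (d q), (d' q); simpl; apply Rabs_le; lra.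
Qed.

Lemma h_diff d d' : h d - h d' = Series (dterm d d').
Proof.
  unfold h, dterm. rewrite <- Series_minus by apply ex_h.
  apply Series_ext. intro n. ring.
Qed.

Lemma series_shift (a : nat -> R) M p :
  (forall q, Rabs (a q) <= M * geo q) ->
  (forall q, (q < p)%nat -> a q = 0) -> Series a = Series (fun q => a (q + p)%nat).
Proof.
  revert a M. induction p; intros a M Hb Hz.
  - apply Series_ext. intro; f_equal; lia.
  - rewrite Series_incr_1 by (apply (series_bound _ M); auto).
    rewrite Hz by lia. rewrite Rplus_0_l.
    rewrite (IHp (fun k => a (S k)) (M / 4)).
    + apply Series_ext. intro; f_equal; lia.
    + intro q. eapply Rle_trans. apply Hb. unfold geo. simpl. lra.
    + intros q Hq. apply Hz. lia.
Qed.

Lemma geo_shift q L : geo (q + L) = (/4)^L * geo q.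
Proof. unfold geo. rewrite <- pow_add. f_equal. lia. Qed.

Lemma hH1 d d' L : agree d d' L -> Rabs (h d - h d') <= (/4)^L / 3.
Proof.
  intro Ha. rewrite h_diff.
  rewrite (series_shift _ 1 L) by (try apply dterm_bound; intros q Hq; unfold dterm; rewrite Ha by lia; ring).
  apply (series_bound _ ((/4)^L)).
  intro q. eapply Rle_trans. apply dterm_bound. rewrite geo_shift. lra.
Qed.

Lemma first_diff (d d' : nat -> bool) p : d p <> d' p ->
  exists q, (q <= p)%nat /\ d q <> d' q /\ agree d d' q.
Proof.
  assert (G : forall n r, (r <= n)%nat -> d r <> d' r ->
    exists q, (q <= r)%nat /\ d q <> d' q /\ agree d d' q).
  { induction n; intros r Hr Hne.
    - exists r. split; [lia|split; auto]. intros s Hs; lia.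
    - destruct (classic (agree d d' r)) as [A|A].
      + exists r; repeat split; auto.
      + apply not_all_ex_not in A. destruct A as [t Ht].
        apply imply_to_and in Ht. destruct Ht as [Ht1 Ht2].
        destruct (IHn t ltac:(lia) Ht2) as [q [? [? ?]]]. exists q; repeat split; auto. lia. }
  intro. apply (G p); auto.
Qed.

Lemma pow_decr x m n : 0 <= x <= 1 -> (m <= n)%nat -> x ^ n <= x ^ m.
Proof.
  intros Hx Hmn. replace n with (m + (n - m))%nat by lia. rewrite pow_add.
  induction (n - m)%nat as [|k IH]. simpl; lra.
  simpl. assert (0 <= x ^ m) by (apply pow_le; lra). assert (0 <= x^k) by (apply pow_le; lra).
  nra.
Qed.

Lemma hH2 d d' L : Rabs (h d - h d') < (/4)^L / 2 -> agree d d' L.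
Proof.
  intros Hl p Hp. apply NNPP. intro Hne.
  destruct (first_diff d d' p Hne) as [q [Hqp [Hq Ha]]].
  rewrite h_diff in Hl.
  rewrite (series_shift _ 1 q) in Hl by (try apply dterm_bound; intros r Hr; unfold dterm; rewrite Ha by lia; ring).
  rewrite Series_incr_1 in Hl.
  2:{ apply (series_bound _ ((/4)^q)). intro r. eapply Rle_trans. apply dterm_bound. rewrite geo_shift. lra. }
  destruct (series_bound (fun k => dterm d d' (S k + q)) ((/4)^(S q))) as [_ Hb].
  { intro r. eapply Rle_trans. apply dterm_bound. replace (S r + q)%nat with (r + S q)%nat by lia. rewrite geo_shift. lra. }
  simpl in Hl.
  assert (E : Rabs (dterm d d' q) = geo q).
  { unfold dterm. destruct (d q), (d' q); try congruence; simpl;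
    rewrite Rabs_mult, (Rabs_pos_eq (geo q)) by (left; apply geo_pos).
    replace (1-0) with 1 by ring; rewrite Rabs_R1; ring.
    rewrite Rabs_minus_sym; replace (1-0) with 1 by ring; rewrite Rabs_R1; ring. }
  assert (Hq4 : (/4)^L <= geo q).
  { unfold geo. apply pow_decr. lra. lia. }
  assert (Hgq : (/4)^(S q) = geo q) by reflexivity.
  assert (Rabs (dterm d d' q) - Rabs (Series (fun k => dterm d d' (S k + q))) <= Rabs (dterm d d' q + Series (fun k => dterm d d' (S k + q)))).
  { pose proof (Rabs_triang_inv (dterm d d' q) (- Series (fun k => dterm d d' (S k + q)))).
    rewrite Rabs_Ropp in H. replace (dterm d d' q - - Series (fun k => dterm d d' (S k + q))) with (dterm d d' q + Series (fun k => dterm d d' (S k + q))) in H by ring. lra. }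
  assert (geo q / 4 <= geo q) by (pose proof (geo_pos q); lra).
  assert (0 < (/4)^L) by (apply pow_lt; lra).
  change (fun k => dterm d d' (S (k + q))) with (fun k => dterm d d' (S k + q)) in Hl. rewrite Hgq in Hb. pose proof (geo_pos q). lra.
Qed.

Lemma h_inj d d' : h d = h d' -> forall p, d p = d' p.
Proof.
  intros E p. apply (hH2 d d' (S p)); [|lia].
  rewrite E, Rminus_eq_0, Rabs_R0. apply Rmult_lt_0_compat. apply pow_lt; lra. lra.
Qed.

End P1M.
Import P1M.

Lemma small_pow e : 0 < e -> exists n, (/4)^n < e.
Proof.
  intro He. destruct (pow_lt_1_zero (/4) ltac:(rewrite Rabs_pos_eq; lra) e He) as [N HN].
  exists N. specialize (HN N (le_n _)). rewrite Rabs_pos_eq in HN; auto. apply pow_le; lra.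
Qed.

Definition K (x : R) : Prop := exists d, x = h d.

Lemma K_closed x : (forall e, 0 < e -> exists d, Rabs (x - h d) < e) -> K x.
Proof.
  intro Hx.
  assert (Hc : forall p : nat, exists d, Rabs (x - h d) < (/4)^(S p) / 4).
  { intro p. apply Hx. apply Rmult_lt_0_compat. apply pow_lt; lra. lra. }
  pose (c := fun p => proj1_sig (constructive_indefinite_description _ (Hc p))).
  assert (Hcp : forall p, Rabs (x - h (c p)) < (/4)^(S p) / 4).
  { intro p. unfold c. destruct (constructive_indefinite_description _ (Hc p)); auto. }
  assert (Ag : forall p q, (q <= p)%nat -> agree (c p) (c q) (S q)).
  { intros p q Hqp. apply hH2.
    assert ((/4)^(S p) <= (/4)^(S q)) by (apply pow_decr; [lra|lia]).
    pose proof (Hcp p). pose proof (Hcp q).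
    replace (h (c p) - h (c q)) with (-(x - h (c p)) + (x - h (c q))) by ring.
    eapply Rle_lt_trans. apply Rabs_triang. rewrite Rabs_Ropp. lra. }
  exists (fun p => c p p).
  assert (Ad : forall p, agree (fun p => c p p) (c p) (S p)).
  { intros p q Hq. symmetry. apply Ag; lia. }
  apply Rminus_diag_uniq. apply NNPP. intro Hne.
  assert (Hpos : 0 < Rabs (x - h (fun p => c p p))) by (apply Rabs_pos_lt; auto).
  destruct (small_pow _ Hpos) as [n Hn].
  pose proof (hH1 _ _ _ (Ad n)). pose proof (Hcp n).
  assert ((/4)^(S n) <= (/4)^n) by (apply pow_decr; [lra|lia]).
  assert (0 < (/4)^(S n)) by (apply pow_lt; lra).
  assert (Rabs (x - h (fun p => c p p)) <= Rabs (x - h (c n)) + Rabs (h (fun p => c p p) - h (c n))).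
  { replace (x - h (fun p => c p p)) with ((x - h (c n)) - (h (fun p => c p p) - h (c n))) by ring.
    eapply Rle_trans. apply Rabs_triang. rewrite Rabs_Ropp. lra. }
  lra.
Qed.

Close Scope R_scope.

Definition pn (m n : nat) : nat := Cantor.to_nat (m, n).
Definition fib (p : nat) : nat := fst (Cantor.of_nat p).

Lemma fib_pos m n : fib (pn m n) = m.
Proof. unfold fib, pn. rewrite Cantor.cancel_of_to. reflexivity. Qed.
Lemma pos_ge m n : (n <= pn m n)%nat.
Proof. unfold pn. pose proof (Cantor.to_nat_non_decreasing m n). lia. Qed.
Lemma pos_inj m n m' n' : pn m n = pn m' n' -> m = m' /\ n = n'.
Proof.
  unfold pn. intro E. apply (f_equal Cantor.of_nat) in E.
  rewrite !Cantor.cancel_of_to in E. inversion E; auto.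
Qed.

Definition CC (d : nat -> bool) : Prop :=
  forall m, exists N, forall n, (N <= n)%nat -> d (pn m n) = false.

Definition copen (V : (nat -> bool) -> Prop) : Prop :=
  forall d, V d -> exists L, forall d', agree d d' L -> V d'.

Definition reg (Z : nat -> Prop) (s : nat -> bool) (L : nat) (d : nat -> bool) : Prop :=
  agree s d L /\ forall q, (L <= q)%nat -> Z q -> d q = false.

Definition state := ((nat -> bool) * nat)%type.

Lemma iterate (good : nat -> state -> Prop) (Q : nat -> state -> state -> Prop) st0 :
  good 0%nat st0 ->
  (forall i st, good i st -> exists st', good (S i) st' /\ Q i st st') ->
  exists sq : nat -> state, sq 0%nat = st0 /\ forall i, good i (sq i) /\ Q i (sq i) (sq (S i)).
Proof.
  intros G0 Hs.
  assert (Hf : forall i st, exists st', good i st -> good (S i) st' /\ Q i st st').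
  { intros i st. destruct (classic (good i st)) as [g|g].
    - destruct (Hs i st g) as [st' ?]. exists st'; auto.
    - exists st; intro; contradiction. }
  pose (f := fun i st => proj1_sig (constructive_indefinite_description _ (Hf i st))).
  assert (Hfs : forall i st, good i st -> good (S i) (f i st) /\ Q i st (f i st)).
  { intros i st. unfold f. destruct (constructive_indefinite_description _ (Hf i st)); auto. }
  pose (sq := fix sq (i : nat) : state := match i with O => st0 | S j => f j (sq j) end).
  exists sq. split; [reflexivity|].
  assert (Gi : forall i, good i (sq i)).
  { induction i; simpl; auto. apply Hfs; auto. }
  intro i. split; auto. apply Hfs; auto.
Qed.

Lemma chain_limit (Z : nat -> nat -> Prop) (sq : nat -> state) :
  (forall i, reg (Z i) (fst (sq i)) (snd (sq i)) (fst (sq i))) ->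
  (forall i d, reg (Z (S i)) (fst (sq (S i))) (snd (sq (S i))) d ->
               reg (Z i) (fst (sq i)) (snd (sq i)) d) ->
  (forall i, (i <= snd (sq i))%nat) ->
  exists x, forall i, reg (Z i) (fst (sq i)) (snd (sq i)) x.
Proof.
  intros Self Nest Len.
  assert (Ch : forall i j d, (i <= j)%nat -> reg (Z j) (fst (sq j)) (snd (sq j)) d ->
                reg (Z i) (fst (sq i)) (snd (sq i)) d).
  { intros i j d Hij. induction Hij; auto. }
  exists (fun q => fst (sq (S q)) q).
  intro i. split.
  - intros q Hq. destruct (le_lt_dec i (S q)) as [Hi|Hi].
    + destruct (Ch i (S q) _ Hi (Self (S q))) as [A _]. apply A; auto.
    + destruct (Ch (S q) i _ ltac:(lia) (Self i)) as [A _]. symmetry. apply A.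
      specialize (Len (S q)). lia.
  - intros q Hq Hz. simpl.
    destruct (Ch i (S q) _ ltac:(specialize (Len i); lia) (Self (S q))) as [_ B].
    apply B; auto.
Qed.

Definition Zk (k : nat) (q : nat) : Prop := (fib q < k)%nat.
Definition tr (s : nat -> bool) (L : nat) : nat -> bool :=
  fun q => if q <? L then s q else false.

Lemma tr_self Z s L : reg Z (tr s L) L (tr s L).
Proof.
  split. intros q _; auto. intros q Hq _. unfold tr.
  destruct (Nat.ltb_spec q L); auto; lia.
Qed.

Lemma tr_reg Z s L d : reg Z (tr s L) L d -> reg Z s L d.
Proof.
  intros [A B]. split; auto. intros q Hq. rewrite <- (A q Hq). unfold tr.
  destruct (Nat.ltb_spec q L); auto; lia.
Qed.

Lemma inner (V : nat -> (nat -> bool) -> Prop) k :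
  (forall i, copen (V i)) -> (forall d, (forall i, V i d) -> CC d) ->
  forall s L, exists s' L' i,
    (forall d, reg (Zk k) s' L' d -> reg (Zk k) s L d) /\
    (forall d, reg (Zk k) s' L' d -> ~ V i d).
Proof.
  intros Vo GC s L. apply NNPP. intro Hn.
  assert (H : forall s' L' i, (forall d, reg (Zk k) s' L' d -> reg (Zk k) s L d) ->
             exists d, reg (Zk k) s' L' d /\ V i d).
  { intros s' L' i Hsub. apply NNPP. intro Hd. apply Hn. exists s', L', i. split; auto.
    intros d Hr Hv. apply Hd. exists d; auto. }
  set (good := fun (i : nat) (st : state) =>
     (forall d, reg (Zk k) (fst st) (snd st) d -> reg (Zk k) s L d) /\
     reg (Zk k) (fst st) (snd st) (fst st) /\ (i <= snd st)%nat).
  set (Q := fun (i : nat) (st st' : state) =>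
     (forall d, reg (Zk k) (fst st') (snd st') d -> reg (Zk k) (fst st) (snd st) d) /\
     (forall d, reg (Zk k) (fst st') (snd st') d -> V i d) /\
     (forall d, reg (Zk k) (fst st') (snd st') d -> d (pn k (snd st)) = true)).
  destruct (iterate good Q (tr s L, L)) as [sq [Hsq0 Hsq]].
  - split; [apply tr_reg|split; [apply tr_self|simpl; lia]].
  - intros i [s0 L0] [Gn [Gs Gl]]. simpl in *.
    set (p := pn k L0).
    set (sp := fun q => if q <? L0 then s0 q else if q =? p then true else false).
    assert (A : forall d, reg (Zk k) sp (S p) d -> reg (Zk k) s0 L0 d).
    { intros d [A1 A2]. split.
      - intros q Hq. rewrite <- A1 by (pose proof (pos_ge k L0); unfold p; lia).
        unfold sp. destruct (Nat.ltb_spec q L0); auto; lia.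
      - intros q Hq Hz. destruct (le_lt_dec (S p) q) as [Hqp|Hqp]; [apply A2; auto|].
        rewrite <- A1 by auto. unfold sp. destruct (Nat.ltb_spec q L0); [lia|].
        destruct (Nat.eqb_spec q p); auto. subst q. unfold Zk in Hz. unfold p in Hz.
        rewrite fib_pos in Hz. lia. }
    destruct (H sp (S p) i (fun d Hd => Gn d (A d Hd))) as [d0 [Hd0 Vd0]].
    destruct (Vo i d0 Vd0) as [M HM].
    assert (B : forall d, reg (Zk k) d0 (M + S p) d -> reg (Zk k) sp (S p) d).
    { intros d [B1 B2]. destruct Hd0 as [C1 C2]. split.
      - intros q Hq. rewrite C1 by auto. apply B1. lia.
      - intros q Hq Hz. destruct (le_lt_dec (M + S p) q); [apply B2; auto|].
        rewrite <- B1 by auto. apply C2; auto. }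
    exists (d0, M + S p). unfold good, Q; cbn [fst snd]. split; [split; [|split]|split; [|split]].
    + intros d Hd. apply Gn, A, B; auto.
    + split. intros q _; auto. intros q Hq Hz. destruct Hd0 as [_ C2]. apply C2; auto; lia.
    + pose proof (pos_ge k L0). unfold p in *. lia.
    + intros d Hd. apply A, B; auto.
    + intros d Hd. apply HM. intros q Hq. destruct Hd as [B1 _]. apply B1. lia.
    + intros d Hd. destruct (B d Hd) as [B1 _]. fold p. rewrite <- B1 by lia.
      unfold sp. destruct (Nat.ltb_spec p L0). pose proof (pos_ge k L0); unfold p in *; lia.
      rewrite Nat.eqb_refl. auto.
  - assert (S1 : forall i, reg (Zk k) (fst (sq i)) (snd (sq i)) (fst (sq i))).
    { intro i. destruct (Hsq i) as [[_ [G2 _]] _]. exact G2. }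
    assert (S2 : forall i d, reg (Zk k) (fst (sq (S i))) (snd (sq (S i))) d ->
                 reg (Zk k) (fst (sq i)) (snd (sq i)) d).
    { intros i d. destruct (Hsq i) as [_ [Q1 _]]. apply Q1. }
    assert (S3 : forall i, (i <= snd (sq i))%nat).
    { intro i. destruct (Hsq i) as [[_ [_ G3]] _]. exact G3. }
    destruct (chain_limit (fun _ => Zk k) sq S1 S2 S3) as [x Hx].
    assert (Vx : forall i, V i x).
    { intro i. destruct (Hsq i) as [_ [_ [Q2 _]]]. apply Q2, Hx. }
    destruct (GC x Vx k) as [N HN].
    assert (T : x (pn k (snd (sq N))) = true).
    { destruct (Hsq N) as [_ [_ [_ Q3]]]. apply Q3, Hx. }
    rewrite HN in T. discriminate. apply S3.
Qed.

Theorem comb (V : nat -> nat -> (nat -> bool) -> Prop) :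
  (forall k i, copen (V k i)) -> ~ (forall d, CC d <-> exists k, forall i, V k i d).
Proof.
  intros Vo Heq.
  set (good := fun (k : nat) (st : state) =>
     reg (Zk k) (fst st) (snd st) (fst st) /\ (k <= snd st)%nat).
  set (Q := fun (k : nat) (st st' : state) =>
     (forall d, reg (Zk (S k)) (fst st') (snd st') d -> reg (Zk k) (fst st) (snd st) d) /\
     exists i, forall d, reg (Zk (S k)) (fst st') (snd st') d -> ~ V k i d).
  destruct (iterate good Q ((fun _ => false), 0%nat)) as [sq [Hsq0 Hsq]].
  - split; [|simpl; lia]. split. intros q _; auto. intros; reflexivity.
  - intros k [s0 L0] [Gs Gl]. cbn [fst snd] in *.
    destruct (inner (V k) k (Vo k) (fun d Hd => proj2 (Heq d) (ex_intro _ k Hd)) s0 L0)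
      as [s' [L' [i [I1 I2]]]].
    exists (tr s' L', S (L' + L0)). unfold good, Q; cbn [fst snd]. split; [split|split].
    + split. intros q _; auto. intros q Hq _. unfold tr. destruct (Nat.ltb_spec q L'); auto; lia.
    + lia.
    + intros d [A1 A2]. apply I1. split.
      * intros q Hq. rewrite <- A1 by lia. unfold tr. destruct (Nat.ltb_spec q L'); auto; lia.
      * intros q Hq Hz. destruct (le_lt_dec (S (L' + L0)) q).
        -- apply A2; auto. unfold Zk in *; lia.
        -- rewrite <- A1 by auto. unfold tr. destruct (Nat.ltb_spec q L'); auto; lia.
    + exists i. intros d [A1 A2]. apply I2. split.
      * intros q Hq. rewrite <- A1 by lia. unfold tr. destruct (Nat.ltb_spec q L'); auto; lia.
      * intros q Hq Hz. destruct (le_lt_dec (S (L' + L0)) q).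
        -- apply A2; auto. unfold Zk in *; lia.
        -- rewrite <- A1 by auto. unfold tr. destruct (Nat.ltb_spec q L'); auto; lia.
  - assert (S1 : forall i, reg (Zk i) (fst (sq i)) (snd (sq i)) (fst (sq i))).
    { intro i. destruct (Hsq i) as [[G2 _] _]. exact G2. }
    assert (S2 : forall i d, reg (Zk (S i)) (fst (sq (S i))) (snd (sq (S i))) d ->
                 reg (Zk i) (fst (sq i)) (snd (sq i)) d).
    { intros i d. destruct (Hsq i) as [_ [Q1 _]]. apply Q1. }
    assert (S3 : forall i, (i <= snd (sq i))%nat).
    { intro i. destruct (Hsq i) as [[_ G3] _]. exact G3. }
    destruct (chain_limit Zk sq S1 S2 S3) as [x Hx].
    assert (Cx : CC x).
    { intro m. exists (snd (sq (S m))). intros n Hn. destruct (Hx (S m)) as [_ B].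
      apply B. pose proof (pos_ge m n); lia. unfold Zk. rewrite fib_pos. lia. }
    apply Heq in Cx. destruct Cx as [k Hk].
    destruct (Hsq k) as [_ [_ [i Hi]]]. apply (Hi x (Hx (S k))). apply Hk.
Qed.

Open Scope R_scope.

Definition w (n : nat) : R := / 2 ^ (S n).
Definition tru (d : nat -> bool) m n : Prop := d (pn m n) = true.
Definition clus (d : nat -> bool) (m : nat) (v : R) : Prop :=
  (exists n, tru d m n) /\ 0 <= v /\ (forall n, tru d m n -> v <= w n) /\
  (forall e, 0 < e -> exists n, tru d m n /\ w n < v + e).
Definition Gd (d : nat -> bool) (y : R) : Prop :=
  (y = -1 /\ forall n, d (pn 0 n) = false) \/ exists m, clus d m (y - INR m).
Definition F (x y : R) : Prop := ~ K x \/ exists d, x = h d /\ Gd d y.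

Lemma w_pos n : 0 < w n.
Proof. unfold w. apply Rinv_0_lt_compat, pow_lt. lra. Qed.
Lemma w_S n : w (S n) = w n / 2.
Proof. unfold w. simpl. field. apply pow_nonzero; lra. Qed.
Lemma w_le_half n : w n <= 1/2.
Proof.
  induction n. unfold w. simpl. lra. rewrite w_S. pose proof (w_pos n). lra.
Qed.
Lemma w_decr n n' : (n <= n')%nat -> w n' <= w n.
Proof.
  induction 1. lra. rewrite w_S. pose proof (w_pos m). lra.
Qed.
Lemma w_small e : 0 < e -> exists N, w N < e.
Proof.
  intro He. destruct (pow_lt_1_zero (/2) ltac:(rewrite Rabs_pos_eq; lra) e He) as [N HN].
  exists N. unfold w. rewrite <- pow_inv. specialize (HN (S N) ltac:(lia)).
  rewrite Rabs_pos_eq in HN; auto. apply pow_le; lra.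
Qed.

Lemma last_true (P : nat -> Prop) N n0 : P n0 -> (forall n, (N <= n)%nat -> ~ P n) ->
  exists n, P n /\ forall n', (n < n')%nat -> ~ P n'.
Proof.
  revert n0. induction N; intros n0 Hn0 HN.
  - exfalso. apply (HN n0); auto; lia.
  - destruct (classic (P N)) as [HP|HP].
    + exists N. split. exact HP. intros n' Hn'. apply HN. lia.
    + apply (IHN n0 Hn0). intros n Hn. destruct (Nat.eq_dec n N). subst; auto. apply HN; lia.
Qed.

Lemma clus_exists d m : (exists n, tru d m n) -> exists v, clus d m v.
Proof.
  intros [n0 Hn0].
  destruct (classic (forall N, exists n, (N <= n)%nat /\ tru d m n)) as [Inf|Fin].
  - exists 0. split; [eauto|split; [lra|split]].
    + intros; left; apply w_pos.
    + intros e He. destruct (w_small e He) as [N HN]. destruct (Inf N) as [n [Hn Ht]].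
      exists n. split; auto. pose proof (w_decr _ _ Hn). lra.
  - apply not_all_ex_not in Fin. destruct Fin as [N HN].
    destruct (last_true (tru d m) N n0) as [n1 [H1 H2]]; auto.
    { intros n Hn Ht. apply HN. eauto. }
    exists (w n1). split; [eauto|split; [left; apply w_pos|split]].
    + intros n Ht. apply w_decr. destruct (le_lt_dec n n1); auto. exfalso; apply (H2 n); auto.
    + intros e He. exists n1. split; auto. lra.
Qed.

Lemma clus_range d m v : clus d m v -> 0 <= v <= 1/2.
Proof.
  intros [[n Hn] [H0 [H1 _]]]. split; auto. pose proof (H1 n Hn). pose proof (w_le_half n). lra.
Qed.

Lemma clus_unique d m v v' : clus d m v -> clus d m v' -> v = v'.
Proof.
  intros [_ [_ [A1 A2]]] [_ [_ [B1 B2]]].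
  apply Rle_antisym; apply Rnot_lt_le; intro Hlt.
  - destruct (B2 (v - v') ltac:(lra)) as [n [Hn Hw]]. pose proof (A1 n Hn). lra.
  - destruct (A2 (v' - v) ltac:(lra)) as [n [Hn Hw]]. pose proof (B1 n Hn). lra.
Qed.

Lemma clus_last d m v n0 : clus d m v -> tru d m n0 -> (forall n, (n0 < n)%nat -> ~ tru d m n) ->
  v = w n0.
Proof.
  intros [_ [_ [A1 A2]]] Ht Hl. apply Rle_antisym. apply A1; auto.
  apply Rnot_lt_le. intro Hlt. destruct (A2 (w n0 - v) ltac:(lra)) as [n [Hn Hw]].
  destruct (le_lt_dec n n0) as [Hle|Hlt2].
  - pose proof (w_decr _ _ Hle). lra.
  - exact (Hl n Hlt2 Hn).
Qed.

Lemma nat_sep (m m' : nat) v v' : m <> m' -> 0 <= v <= 1/2 -> 0 <= v' <= 1/2 ->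
  1/2 <= Rabs ((INR m + v) - (INR m' + v')).
Proof.
  intros Hne Hv Hv'. destruct (Nat.lt_gt_cases m m') as [[Hl|Hl] _]; auto.
  - apply le_INR in Hl. rewrite S_INR in Hl. rewrite Rabs_minus_sym. rewrite Rabs_pos_eq; lra.
  - apply le_INR in Hl. rewrite S_INR in Hl. rewrite Rabs_pos_eq; lra.
Qed.

Lemma Gd_shape d y : Gd d y -> (y = -1 /\ forall n, d (pn 0 n) = false) \/
  exists m v, y = INR m + v /\ clus d m v.
Proof.
  intros [A|[m Hm]]. left; auto. right. exists m, (y - INR m). split; auto. ring.
Qed.

Lemma Gd_discrete d y y' : Gd d y -> Gd d y' -> y <> y' -> 1/2 <= Rabs (y - y').
Proof.
  intros Hy Hy' Hne.
  destruct (Gd_shape _ _ Hy) as [[E1 _]|[m [v [E1 C1]]]];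
  destruct (Gd_shape _ _ Hy') as [[E2 _]|[m' [v' [E2 C2]]]].
  - exfalso; apply Hne; congruence.
  - pose proof (clus_range _ _ _ C2). pose proof (pos_INR m'). subst. rewrite Rabs_minus_sym, Rabs_pos_eq; lra.
  - pose proof (clus_range _ _ _ C1). pose proof (pos_INR m). subst. rewrite Rabs_pos_eq; lra.
  - subst. destruct (Nat.eq_dec m m') as [<-|Hmm].
    + rewrite (clus_unique _ _ _ _ C1 C2) in Hne. exfalso; apply Hne; auto.
    + apply nat_sep; auto; eapply clus_range; eauto.
Qed.

Lemma F_K d y : F (h d) y <-> Gd d y.
Proof.
  split.
  - intros [nK|[d' [E G]]]. exfalso; apply nK; exists d; auto.
    replace d with d'; auto. apply functional_extensionality. intro p. symmetry. apply h_inj; auto.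
  - intro G. right. exists d; auto.
Qed.

Lemma discrete_closed (S : R -> Prop) :
  (forall y y', S y -> S y' -> y <> y' -> 1/2 <= Rabs (y - y')) -> closed_set S.
Proof.
  intros Hd. unfold closed_set, open_set, neighbourhood, complementary, included, disc.
  intros y Hy.
  destruct (classic (exists z, S z /\ Rabs (z - y) < 1/4)) as [[z [Hz Hzy]]|Hn].
  - assert (Hzy' : z <> y) by (intro; subst; contradiction).
    assert (0 < Rabs (z - y)) by (apply Rabs_pos_lt; intro; apply Hzy'; lra).
    exists (mkposreal _ H). simpl. intros t Ht St.
    destruct (Req_dec t z) as [->|Htz]. lra.
    pose proof (Hd t z St Hz Htz).
    assert (Rabs (t - z) <= Rabs (t - y) + Rabs (z - y)).
    { replace (t - z) with ((t - y) - (z - y)) by ring. eapply Rle_trans. apply Rabs_triang. rewrite Rabs_Ropp; lra. }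
    lra.
  - exists (mkposreal (1/4) ltac:(lra)). simpl. intros t Ht St. apply Hn. exists t. split; auto.
Qed.

Lemma F_nonempty x : I01 x -> exists y, F x y.
Proof.
  intros _. destruct (classic (K x)) as [[d ->]|nK]; [|exists 0; left; auto].
  destruct (classic (forall n, d (pn 0 n) = false)) as [E|NE].
  - exists (-1). apply F_K. left; auto.
  - apply not_all_ex_not in NE. destruct NE as [n Hn]. apply Bool.not_false_is_true in Hn.
    destruct (clus_exists d 0 (ex_intro _ n Hn)) as [v Hv].
    exists v. apply F_K. right. exists 0%nat. simpl. replace (v - 0) with v by ring. auto.
Qed.

Lemma F_closed x : I01 x -> closed_set (F x).
Proof.
  intros _. destruct (classic (K x)) as [[d ->]|nK].
  - apply discrete_closed. intros y y' Hy Hy'. apply (F_K d) in Hy; apply (F_K d) in Hy'. apply (Gd_discrete d); auto.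
  - unfold closed_set, open_set, complementary. intros y Hy. exfalso. apply Hy. left; auto.
Qed.

Definition setb (d : nat -> bool) (p : nat) : nat -> bool :=
  fun q => if Nat.eqb q p then true else d q.

Lemma setb_agree d p L : (L <= p)%nat -> agree d (setb d p) L.
Proof.
  intros Hp q Hq. unfold setb. destruct (Nat.eqb_spec q p); auto; lia.
Qed.

Lemma near_point e : 0 < e -> exists L, (/4)^L / 3 < e.
Proof.
  intro He. destruct (small_pow e He) as [L HL]. exists L. pose proof (pow_lt (/4) L ltac:(lra)). lra.
Qed.

Lemma cont_CC d : mv_continuous_at F (h d) -> ~ CC d.
Proof.
  intros [y [Hy Hc]] HC. apply F_K in Hy.
  destruct (Gd_shape _ _ Hy) as [[E Z]|[m [v [E Cl]]]].
  - destruct (Hc (1/2) ltac:(lra)) as [del [Hdel Hx]].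
    destruct (near_point del Hdel) as [L HL].
    set (d' := setb d (pn 0 L)).
    assert (Ag : agree d d' L) by (apply setb_agree, pos_ge).
    destruct (Hx (h d') (h_I01 d')) as [y' [Hy' Hyy]].
    { pose proof (hH1 _ _ _ Ag). rewrite Rabs_minus_sym. lra. }
    apply F_K in Hy'. destruct (Gd_shape _ _ Hy') as [[E' Z']|[m' [v' [E' Cl']]]].
    + specialize (Z' L). unfold d', setb in Z'. rewrite Nat.eqb_refl in Z'. discriminate.
    + pose proof (clus_range _ _ _ Cl'). pose proof (pos_INR m'). subst.
      rewrite Rabs_minus_sym, Rabs_pos_eq in Hyy; lra.
  - destruct (HC m) as [N HN].
    destruct Cl as [[n0 Hn0] Clr].
    destruct (last_true (tru d m) N n0 Hn0) as [n1 [Ht1 Hl1]].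
    { intros n Hn Ht. unfold tru in Ht. rewrite HN in Ht by auto. discriminate. }
    assert (Ev : v = w n1) by (apply (clus_last d m v n1); auto; split; eauto).
    destruct (Hc (w n1 / 2) ltac:(pose proof (w_pos n1); lra)) as [del [Hdel Hx]].
    destruct (near_point del Hdel) as [L HL].
    set (n2 := (L + S n1)%nat).
    set (d' := setb d (pn m n2)).
    assert (Ag : agree d d' L) by (apply setb_agree; pose proof (pos_ge m n2); unfold n2 in *; lia).
    destruct (Hx (h d') (h_I01 d')) as [y' [Hy' Hyy]].
    { pose proof (hH1 _ _ _ Ag). rewrite Rabs_minus_sym. lra. }
    apply F_K in Hy'. pose proof (w_le_half n1). pose proof (w_pos n1).
    destruct (Gd_shape _ _ Hy') as [[E' Z']|[m' [v' [E' Cl']]]].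
    + pose proof (pos_INR m). subst. rewrite Rabs_pos_eq in Hyy; lra.
    + destruct (Nat.eq_dec m m') as [<-|Hmm].
      * destruct Cl' as [_ [Hv0 [Hv1 _]]].
        assert (T : tru d' m n2) by (unfold tru, d', setb; rewrite Nat.eqb_refl; auto).
        pose proof (Hv1 n2 T) as W1. pose proof (w_decr (S n1) n2 ltac:(unfold n2; lia)) as W2.
        rewrite w_S in W2. subst. rewrite Rabs_pos_eq in Hyy; lra.
      * pose proof (nat_sep m m' v v' Hmm ltac:(subst; lra) (clus_range _ _ _ Cl')).
        subst. lra.
Qed.

Lemma CC_cont d : ~ CC d -> mv_continuous_at F (h d).
Proof.
  intro nC. unfold CC in nC. apply not_all_ex_not in nC. destruct nC as [m Hm].
  assert (Inf : forall N, exists n, (N <= n)%nat /\ tru d m n).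
  { intro N. apply NNPP. intro Hn. apply Hm. exists N. intros n Hle.
    apply Bool.not_true_is_false. intro Ht. apply Hn. exists n; auto. }
  exists (INR m). split.
  - apply F_K. right. exists m. replace (INR m - INR m) with 0 by ring.
    split; [destruct (Inf 0%nat) as [n [_ ?]]; eauto|split; [lra|split]].
    + intros; left; apply w_pos.
    + intros e He. destruct (w_small e He) as [N HN]. destruct (Inf N) as [n [Hn Ht]].
      exists n. split; auto. pose proof (w_decr _ _ Hn). lra.
  - intros e He. destruct (w_small e He) as [N HN]. destruct (Inf N) as [n [Hn Ht]].
    exists ((/4)^(S (pn m n)) / 2). split. pose proof (pow_lt (/4) (S (pn m n)) ltac:(lra)); lra.
    intros x' _ Hx'.
    destruct (classic (K x')) as [[d' ->]|nK]; [|exists (INR m); split; [left; auto|rewrite Rminus_eq_0, Rabs_R0; auto]].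
    assert (Ag : agree d d' (S (pn m n))) by (apply hH2; rewrite Rabs_minus_sym; auto).
    assert (T : tru d' m n) by (unfold tru; rewrite <- Ag by lia; auto).
    destruct (clus_exists d' m (ex_intro _ n T)) as [v Hv].
    exists (INR m + v). split.
    + apply F_K. right. exists m. replace (INR m + v - INR m) with v by ring. auto.
    + destruct Hv as [_ [Hv0 [Hv1 _]]]. pose proof (Hv1 n T). pose proof (w_decr _ _ Hn).
      replace (INR m - (INR m + v)) with (- v) by ring. rewrite Rabs_Ropp, Rabs_pos_eq; lra.
Qed.

Lemma cp_iff d : continuity_points F (h d) <-> ~ CC d.
Proof.
  split. intros [_ H]. apply cont_CC; auto. intro. split. apply h_I01. apply CC_cont; auto.
Qed.

Definition ej (j : nat) : R := / (INR j + 1).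
Lemma ej_pos j : 0 < ej j.
Proof. unfold ej. apply Rinv_0_lt_compat. pose proof (pos_INR j). lra. Qed.
Lemma ej_small e : 0 < e -> exists j, ej j < e.
Proof.
  intro He. destruct (archimed (/ e)) as [A _].
  assert (0 < / e) by (apply Rinv_0_lt_compat; auto).
  assert (Hz : (0 < up (/ e))%Z) by (apply lt_IZR; lra).
  exists (Z.to_nat (up (/ e))). unfold ej. rewrite INR_IZR_INZ, Z2Nat.id by lia.
  assert (0 < IZR (up (/e))) by lra.
  set (a := IZR (up (/ e)) + 1).
  assert (Ha : 1 < e * a).
  { replace 1 with (e * / e) by (field; lra). apply Rmult_lt_compat_l; auto. unfold a; lra. }
  assert (0 < a) by (unfold a; lra).
  replace (/ a) with (/ a * 1) by ring.
  apply Rlt_le_trans with (/ a * (e * a)). apply Rmult_lt_compat_l; auto. apply Rinv_0_lt_compat; auto.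
  right. field. lra.
Qed.
Lemma le_of_ej a b : (forall j, a < b + ej j) -> a <= b.
Proof.
  intro H. apply Rnot_lt_le. intro Hlt. destruct (ej_small (a - b) ltac:(lra)) as [j Hj].
  specialize (H j). lra.
Qed.

Lemma nat_floor z : 0 <= z -> exists m : nat, INR m <= z < INR m + 1.
Proof.
  intro Hz. destruct (archimed z) as [A B].
  assert (Hk : (1 <= up z)%Z) by (apply le_IZR; assert (0 < IZR (up z)) by lra; apply lt_IZR in H; apply IZR_le; lia).
  exists (Z.to_nat (up z - 1)). rewrite INR_IZR_INZ, Z2Nat.id by lia.
  rewrite minus_IZR. lra.
Qed.

Definition Psi (m n j : nat) (d : nat -> bool) (y : R) : Prop :=
  (y <= -1/4 -> Rabs (y + 1) < ej j /\ d (pn 0 n) = false) /\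
  (INR m - 1/4 <= y <= INR m + 3/4 ->
    (exists n', tru d m n') /\ INR m - ej j < y /\
    (d (pn m n) = false \/ y - INR m < w n + ej j) /\
    (exists n', tru d m n' /\ w n' < y - INR m + ej j)).

Lemma Gd_Psi d y : Gd d y <-> forall m n j, Psi m n j d y.
Proof.
  split.
  - intros G m n j. pose proof (ej_pos j).
    destruct (Gd_shape _ _ G) as [[E Z]|[m0 [v [E Cl]]]].
    + subst. split.
      * intros _. split; auto. replace (-1 + 1) with 0 by ring. rewrite Rabs_R0; auto.
      * intros [Hm _]. pose proof (pos_INR m). lra.
    + pose proof (clus_range _ _ _ Cl). pose proof (pos_INR m0). subst. split.
      * intros. lra.
      * intros [Ha Hb]. assert (m = m0).
        { destruct (lt_eq_lt_dec m m0) as [[Hl|Hl]|Hl]; auto.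
          - apply le_INR in Hl. rewrite S_INR in Hl. lra.
          - apply le_INR in Hl. rewrite S_INR in Hl. lra. }
        subst m0. destruct Cl as [Ex [Hv0 [Hv1 Hv2]]].
        replace (INR m + v - INR m) with v by ring.
        split; [auto|split; [lra|split]].
        -- destruct (d (pn m n)) eqn:Ed; [right|left; auto]. pose proof (Hv1 n Ed). lra.
        -- apply Hv2. auto.
  - intro HP. destruct (Rle_lt_dec y (-1/4)) as [Hy|Hy].
    + left. split.
      * assert (forall j, Rabs (y + 1) < ej j) by (intro j; apply (HP 0%nat 0%nat j); auto).
        assert (Rabs (y + 1) <= 0) by (apply le_of_ej; intro j; specialize (H j); lra).
        pose proof (Rle_abs (y + 1)). pose proof (Rle_abs (-(y + 1))) as Hn. rewrite Rabs_Ropp in Hn. lra.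
      * intro n. apply (HP 0%nat n 0%nat); auto.
    + destruct (nat_floor (y + 1/4) ltac:(lra)) as [m [Hm1 Hm2]].
      right. exists m.
      assert (R1 : INR m - 1/4 <= y <= INR m + 3/4) by lra.
      split; [apply (HP m 0%nat 0%nat); auto|split; [|split]].
      * assert (INR m <= y). { apply le_of_ej. intro j. destruct (HP m 0%nat j) as [_ Hc].
          destruct (Hc R1) as [_ [? _]]. lra. } lra.
      * intros n Ht. apply le_of_ej. intro j. destruct (HP m n j) as [_ Hc].
        destruct (Hc R1) as [_ [_ [[Hf|Hf] _]]]. unfold tru in Ht. congruence. lra.
      * intros e He. destruct (ej_small e He) as [j Hj]. destruct (HP m 0%nat j) as [_ Hc].
        destruct (Hc R1) as [_ [_ [_ [n' [Hn' Hw]]]]]. exists n'. split; auto. lra.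
Qed.

Definition openDY (P : (nat -> bool) -> R -> Prop) : Prop :=
  forall d y, P d y -> exists L e, 0 < e /\
    forall d' y', agree d d' L -> Rabs (y' - y) < e -> P d' y'.

Lemma agree_mono d d' L L' : (L <= L')%nat -> agree d d' L' -> agree d d' L.
Proof. intros Hl A p Hp. apply A. lia. Qed.

Lemma oAnd P Q : openDY P -> openDY Q -> openDY (fun d y => P d y /\ Q d y).
Proof.
  intros HP HQ d y [Pd Qd]. destruct (HP d y Pd) as [L1 [e1 [He1 H1']]].
  destruct (HQ d y Qd) as [L2 [e2 [He2 H2']]].
  exists (L1 + L2)%nat, (Rmin e1 e2). split. apply Rmin_pos; auto.
  intros d' y' A Hy. pose proof (Rmin_l e1 e2). pose proof (Rmin_r e1 e2). split.
  apply H1'. eapply agree_mono; [|eauto]; lia. lra.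
  apply H2'. eapply agree_mono; [|eauto]; lia. lra.
Qed.

Lemma oOr P Q : openDY P -> openDY Q -> openDY (fun d y => P d y \/ Q d y).
Proof.
  intros HP HQ d y [Pd|Qd].
  - destruct (HP d y Pd) as [L [e [He H]]]. exists L, e. split; [auto|]. intros d0 y0 A0 B0. left; apply H; auto.
  - destruct (HQ d y Qd) as [L [e [He H]]]. exists L, e. split; [auto|]. intros d0 y0 A0 B0. right; apply H; auto.
Qed.

Lemma oEx (P : nat -> (nat -> bool) -> R -> Prop) : (forall k, openDY (P k)) ->
  openDY (fun d y => exists k, P k d y).
Proof.
  intros HP d y [k Pk]. destruct (HP k d y Pk) as [L [e [He H]]]. exists L, e. split; auto.
  intros. exists k; auto.
Qed.

Lemma oY (Py : R -> Prop) : (forall y, Py y -> exists e, 0 < e /\ forall y', Rabs (y' - y) < e -> Py y') ->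
  openDY (fun _ y => Py y).
Proof.
  intros H d y Hy. destruct (H y Hy) as [e [He H']]. exists 0%nat, e. split; auto.
Qed.

Lemma oD p b : openDY (fun d _ => d p = b).
Proof.
  intros d y Hd. exists (S p), 1. split. lra. intros d' y' A _. rewrite <- A by lia. auto.
Qed.

Lemma oImpl a b P : openDY P -> openDY (fun d y => a <= y <= b -> P d y).
Proof.
  intros HP d y H. destruct (Rlt_le_dec y a) as [Ha|Ha].
  - exists 0%nat, (a - y). split. lra. intros d' y' _ Hy [Hy1 _].
    pose proof (Rle_abs (y' - y)). lra.
  - destruct (Rle_lt_dec y b) as [Hb|Hb].
    + destruct (HP d y (H (conj Ha Hb))) as [L [e [He H']]]. exists L, e. split; auto.
      intros; auto.
    + exists 0%nat, (y - b). split. lra. intros d' y' _ Hy [_ Hy2].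
      pose proof (Rle_abs (-(y' - y))). rewrite Rabs_Ropp in H0. lra.
Qed.

Lemma oImplLe c P : openDY P -> openDY (fun d y => y <= c -> P d y).
Proof.
  intros HP d y H. destruct (Rle_lt_dec y c) as [Hc|Hc].
  - destruct (HP d y (H Hc)) as [L [e [He H']]]. exists L, e. split; auto. intros; auto.
  - exists 0%nat, (y - c). split. lra. intros d' y' _ Hy Hy2.
    pose proof (Rle_abs (-(y' - y))). rewrite Rabs_Ropp in H0. lra.
Qed.

Lemma yball (y y' : R) e : Rabs (y' - y) < e -> y - e < y' < y + e.
Proof.
  intro H. pose proof (Rle_abs (y' - y)) as Ha. pose proof (Rle_abs (-(y' - y))) as Hb. rewrite Rabs_Ropp in Hb. lra.
Qed.

Lemma Psi_open m n j : openDY (Psi m n j).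
Proof.
  unfold Psi. apply oAnd.
  - apply oImplLe. apply oAnd; [|apply oD].
    apply oY. intros y Hy. exists (ej j - Rabs (y + 1)). split. lra.
    intros y' Hy'. replace (y' + 1) with ((y + 1) + (y' - y)) by ring.
    eapply Rle_lt_trans. apply Rabs_triang. lra.
  - apply oImpl. apply oAnd; [|apply oAnd; [|apply oAnd]].
    + apply oEx. intro k. apply oD.
    + apply oY. intros y Hy. exists (y - (INR m - ej j)). split. lra. intros y' Hy'. apply yball in Hy'. lra.
    + apply oOr. apply oD. apply oY. intros y Hy. exists (w n + ej j - (y - INR m)). split. lra.
      intros y' Hy'. apply yball in Hy'. lra.
    + apply oEx. intro k. apply oAnd. apply oD. apply oY. intros y Hy.
      exists (y - INR m + ej j - w k). split. lra. intros y' Hy'. apply yball in Hy'. lra.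
Qed.

Definition Psik (k : nat) : (nat -> bool) -> R -> Prop :=
  Psi (fst (Cantor.of_nat k)) (fst (Cantor.of_nat (snd (Cantor.of_nat k))))
      (snd (Cantor.of_nat (snd (Cantor.of_nat k)))).

Lemma Psik_all d y : (forall k, Psik k d y) <-> Gd d y.
Proof.
  rewrite Gd_Psi. split.
  - intros H m n j. specialize (H (Cantor.to_nat (m, Cantor.to_nat (n, j)))).
    unfold Psik in H. rewrite Cantor.cancel_of_to in H. cbn [fst snd] in H. rewrite Cantor.cancel_of_to in H. exact H.
  - intros H k. apply H.
Qed.

Definition U (k : nat) (p : R * R) : Prop :=
  exists e, 0 < e /\ forall d y', Rabs (fst p - h d) < e -> Rabs (y' - snd p) < e -> Psik k d y'.

Lemma U_open k : open_RR (U k).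
Proof.
  intros p [e [He H]]. exists (e / 2). split. lra.
  intros q Hq1 Hq2. exists (e / 2). split. lra.
  intros d y' A B. apply H.
  - replace (fst p - h d) with (-(fst q - fst p) + (fst q - h d)) by ring.
    eapply Rle_lt_trans. apply Rabs_triang. rewrite Rabs_Ropp. lra.
  - replace (y' - snd p) with ((y' - snd q) + (snd q - snd p)) by ring.
    eapply Rle_lt_trans. apply Rabs_triang. lra.
Qed.

Lemma F_U x y : F x y <-> forall k, U k (x, y).
Proof.
  split.
  - intros HF k. destruct (classic (K x)) as [[d0 ->]|nK].
    + apply F_K in HF. apply Psik_all with (k := k) in HF.
      destruct (Psi_open _ _ _ d0 y HF) as [L [e [He HL]]].
      exists (Rmin e ((/4)^L / 2)). split.
      { apply Rmin_pos; auto. pose proof (pow_lt (/4) L ltac:(lra)); lra. }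
      intros d y' A B. simpl in *. pose proof (Rmin_l e ((/4)^L / 2)). pose proof (Rmin_r e ((/4)^L / 2)).
      apply HL. apply hH2. lra. lra.
    + assert (Hf : exists e, 0 < e /\ forall d, e <= Rabs (x - h d)).
      { apply NNPP. intro Hn. apply nK. apply K_closed. intros e He. apply NNPP. intro Hd.
        apply Hn. exists e. split; auto. intro d. apply Rnot_lt_le. intro Hl. apply Hd. exists d; auto. }
      destruct Hf as [e [He Hf]]. exists e. split; auto. intros d y' A. simpl in A.
      specialize (Hf d). lra.
  - intro HU. destruct (classic (K x)) as [[d ->]|nK]; [|left; auto].
    apply F_K. apply Psik_all. intro k. destruct (HU k) as [e [He H]]. apply H; simpl.
    rewrite Rminus_eq_0, Rabs_R0; auto. rewrite Rminus_eq_0, Rabs_R0; auto.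
Qed.

Lemma graph_Pi02 : Pi0 open_RR I01xR 2 (graph F).
Proof.
  split.
  - intros p [Hp _]. exact Hp.
  - apply (Sigma0_union open_RR I01xR 1 _ (fun k p => I01xR p /\ ~ U k p)).
    + intros k p [Hp _]; auto.
    + intro k. exists 1%nat. split. lia.
      apply (Sigma0_open open_RR I01xR (U k)). apply U_open.
      intro p. split.
      * intros [Hp Hn]. split; auto. apply NNPP. intro. apply Hn. split; auto.
      * intros [Hp Hu]. split; auto. intros [_ Hn]. auto.
    + intro p. destruct p as [x y]. unfold graph, I01xR. simpl. split.
      * intros [Hp Hn]. apply NNPP. intro Hk. apply Hn. split; auto. apply F_U. intro k.
        apply NNPP. intro Hu. apply Hk. exists k. split; auto.
      * intros [k [Hp Hu]]. split; auto. intros [_ HF]. apply Hu. apply F_U. auto.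
Qed.

Lemma sig1_inv {T : Type} (O : (T -> Prop) -> Prop) D A :
  Sigma0 O D 1 A -> exists U, O U /\ forall x, A x <-> D x /\ U x.
Proof.
  intro H. inversion H; subst.
  - eexists. split; eauto.
  - match goal with Hk : forall k : nat, exists j : nat, _ |- _ => destruct (Hk 0%nat) as [j [Hj _]] end. lia.
Qed.

Lemma sigSS_inv {T : Type} (O : (T -> Prop) -> Prop) D n A :
  Sigma0 O D (S (S n)) A -> exists B : nat -> T -> Prop,
    (forall k x, B k x -> D x) /\
    (forall k, exists j, (1 <= j <= S n)%nat /\ Sigma0 O D j (fun x => D x /\ ~ B k x)) /\
    (forall x, A x <-> exists k, B k x).
Proof.
  intro H. inversion H; subst. exists B. auto.
Qed.

Lemma open_pull U : open_set U -> copen (fun d => U (h d)).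
Proof.
  intros HU d Hd. destruct (HU _ Hd) as [del Hdel].
  destruct (near_point del (cond_pos del)) as [L HL]. exists L. intros d' A.
  apply Hdel. unfold disc. pose proof (hH1 _ _ _ A). rewrite Rabs_minus_sym. lra.
Qed.

Lemma Vexists (Bk : R -> Prop) : (forall x, Bk x -> I01 x) ->
  (exists j, (1 <= j <= 2)%nat /\ Sigma0 open_set I01 j (fun x => I01 x /\ ~ Bk x)) ->
  exists V : nat -> (nat -> bool) -> Prop, (forall i, copen (V i)) /\
    forall d, Bk (h d) <-> forall i, V i d.
Proof.
  intros HB [j [Hj HS]]. assert (j = 1%nat \/ j = 2%nat) as [->| ->] by lia.
  - destruct (sig1_inv _ _ _ HS) as [U0 [HU E]].
    assert (Eq : forall d, Bk (h d) <-> ~ U0 (h d)).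
    { intro d. pose proof (h_I01 d). specialize (E (h d)). split.
      - intros Hb Hu. apply (proj2 E (conj H Hu)). auto.
      - intro Hn. apply NNPP. intro Hb. apply Hn. apply (proj1 E (conj H Hb)). }
    exists (fun i d => exists d', agree d d' i /\ ~ U0 (h d')). split.
    + intros i d [d' [A Hn]]. exists i. intros d'' A'. exists d'. split; auto.
      intros p Hp. rewrite <- A' by auto. apply A; auto.
    + intro d. rewrite Eq. split.
      * intros Hn i. exists d. split; auto. intros p _; auto.
      * intros HV Hu. destruct (open_pull U0 HU d Hu) as [L HL].
        destruct (HV L) as [d' [A Hn]]. apply Hn. apply HL; auto.
  - destruct (sigSS_inv _ _ _ _ HS) as [Bs [HBs1 [HBs2 HBs3]]].
    assert (Ui : forall i, exists U0, open_set U0 /\ forall x, I01 x /\ ~ Bs i x <-> I01 x /\ U0 x).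
    { intro i. destruct (HBs2 i) as [j' [Hj' Hs']]. assert (j' = 1%nat) by lia. subst.
      apply sig1_inv in Hs'. auto. }
    exists (fun i d => ~ Bs i (h d)). split.
    + intros i. destruct (Ui i) as [U0 [HU E]].
      assert (Eq : forall d, ~ Bs i (h d) <-> U0 (h d)).
      { intro d. pose proof (h_I01 d). specialize (E (h d)). split.
        - intro Hn. apply (proj1 E (conj H Hn)).
        - intro Hu. apply (proj2 E (conj H Hu)). }
      intros d Hd. apply Eq in Hd. destruct (open_pull U0 HU d Hd) as [L HL].
      exists L. intros d' A. apply Eq. apply HL; auto.
    + intro d. pose proof (h_I01 d). specialize (HBs3 (h d)). split.
      * intros Hb i Hbs. apply (proj2 HBs3 (ex_intro _ i Hbs)). auto.
      * intros Hn. apply NNPP. intro Hb. destruct (proj1 HBs3 (conj H Hb)) as [i Hi].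
        apply (Hn i Hi).
Qed.

Lemma not_Pi03 : ~ Pi0 open_set I01 3 (continuity_points F).
Proof.
  intros [_ HS]. destruct (sigSS_inv _ _ _ _ HS) as [B [HB1 [HB2 HB3]]].
  assert (HV : forall k, exists V : nat -> (nat -> bool) -> Prop, (forall i, copen (V i)) /\
                 forall d, B k (h d) <-> forall i, V i d).
  { intro k. apply Vexists. apply HB1. apply HB2. }
  pose (V := fun k => proj1_sig (constructive_indefinite_description _ (HV k))).
  assert (HVs : forall k, (forall i, copen (V k i)) /\ forall d, B k (h d) <-> forall i, V k i d).
  { intro k. unfold V. destruct (constructive_indefinite_description _ (HV k)); auto. }
  apply (comb V).
  - intros k. apply HVs.
  - intro d. pose proof (cp_iff d) as Cp. pose proof (h_I01 d). specialize (HB3 (h d)). split.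
    + intro Hc. assert (Hn : ~ continuity_points F (h d)) by (intro Hp; apply Cp in Hp; auto).
      destruct (proj1 HB3 (conj H Hn)) as [k Hk]. exists k. apply HVs. auto.
    + intros [k Hk]. apply HVs in Hk. destruct (proj2 HB3 (ex_intro _ k Hk)) as [_ Hn].
      apply NNPP. intro Hc. apply Hn. apply Cp. auto.
Qed.

Theorem theorem2p6 :
  exists F : R -> R -> Prop,
    (forall x, I01 x -> exists y, F x y) /\
    (forall x, I01 x -> closed_set (F x)) /\
    Pi0 open_RR I01xR 2 (graph F) /\
    ~ Pi0 open_set I01 3 (continuity_points F).
Proof.
  exists F. split; [apply F_nonempty|split; [apply F_closed|split; [apply graph_Pi02|apply not_Pi03]]].
Qed.
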